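(* For $n\ge 0$ and $q\ge1$, let $\psi:\mathcal{B}_n\to\mathcal{B}_{n+q+1}$ be defined by $\psi(v01^k)=v001^{k+q}$ for any binary word $v$ and $k\ge0$, and $\psi(1^n)=1^{n+q+1}$. Then $\psi(\mathcal{W}^q_n)$ is exactly the set of $q$-decreasing words of length $n+q+1$ ending with at least $q$ letters $1$.
   Context: $\mathcal{B}_n$ is the set of binary words of length $n$. For $q\ge1$, a binary word is $q$-decreasing if for every maximal run of $0$s, of length $a>0$, together with the (possibly empty) maximal run of $1$s immediately following it, of length $b$, one has $q\cdot a>b$; $\mathcal{W}^q_n$ is the set of $q$-decreasing words of length $n$. *)

(* Defs.v *)
(* Binary words are [seq bool] with [false] = letter 0, [true] = letter 1. *)
From mathcomp Require Import all_boot.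
Set Implicit Arguments. Unset Strict Implicit. Unset Printing Implicit Defensive.

Definition binword (n : nat) (w : seq bool) : Prop := size w = n.

(* q-decreasing: for every maximal run of 0s (length a > 0) in w, followed by the
   (possibly empty) maximal run of 1s of length b immediately after it, q * a > b.
   A maximal 0-run followed by its 1-run is a factorization
     w = u ++ 0^a ++ 1^b ++ t
   with a > 0, u empty or ending with 1, t empty or starting with 0,
   and (b = 0 -> t = [::]) (otherwise the 0-run would not be maximal). *)
Definition qdecreasing (q : nat) (w : seq bool) : Prop :=
  forall (u t : seq bool) (a b : nat),
    w = u ++ nseq a false ++ nseq b true ++ t ->
    0 < a ->
    last true u = true ->
    (t = [::] \/ head true t = false) ->
    (b = 0 -> t = [::]) ->
    b < q * a.

Definition trailing_ones (w : seq bool) : nat := find (fun x => ~~ x) (rev w).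

(* psi(v 0 1^k) = v 0 0 1^(k+q),  psi(1^n) = 1^(n+q+1) *)
Definition psi (q : nat) (w : seq bool) : seq bool :=
  let k := trailing_ones w in
  if k == size w then nseq (size w + q + 1) true
  else take (size w - k - 1) w ++ [:: false; false] ++ nseq (k + q) true.

Lemma psi_ones q n : psi q (nseq n true) = nseq (n + q + 1) true.
Proof.
rewrite /psi /trailing_ones size_nseq.
have -> : find (fun x => ~~ x) (rev (nseq n true)) = n.
  by rewrite rev_nseq; elim: n => //= n ->.
by rewrite eqxx.
Qed.

Lemma psi_last0 q v k :
  psi q (v ++ false :: nseq k true) = v ++ [:: false; false] ++ nseq (k + q) true.
Proof.
have Hf : forall m, find (fun x : bool => ~~ x) (nseq m true ++ [:: false] ++ rev v) = m.
  by elim=> //= m ->.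
rewrite /psi /trailing_ones rev_cat rev_cons rev_nseq -cats1 -catA Hf.
rewrite size_cat /= size_nseq.
have -> : (k == size v + k.+1) = false.
  by apply/negbTE; rewrite neq_ltn addnS ltnS leq_addl.
have -> : size v + k.+1 - k - 1 = size v by rewrite addnS -addSn addnK subn1.
by rewrite take_size_cat.
Qed.

(* Main.v *)
Require Import Defs.
From mathcomp Require Import all_boot.
From mathcomp Require Import zify.

Lemma nseqS_cat (T : Type) a (x : T) s : nseq a.+1 x ++ s = nseq a x ++ x :: s.
Proof. by elim: a => //= a ->. Qed.

Lemma last_nseqS (T : Type) (z x : T) a : last z (nseq a.+1 x) = x.
Proof. by elim: a => //= a ->. Qed.

Lemma cat_split (T : Type) (x y z w : seq T) :
  x ++ y = z ++ w -> size x <= size z -> exists m, z = x ++ m /\ y = m ++ w.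
Proof.
move=> H Hs; exists (take (size z - size x) y).
have H1 := congr1 (take (size z)) H; have H2 := congr1 (drop (size z)) H.
rewrite (take_size_cat _ (erefl _)) in H1; rewrite (drop_size_cat _ (erefl _)) in H2.
have Hf : (size z < size x) = false by apply/negbTE; rewrite -leqNgt.
rewrite take_cat Hf in H1; rewrite drop_cat Hf in H2.
split; first by rewrite H1.
by rewrite -H2 cat_take_drop.
Qed.

Arguments cat_split {T x y z w}.

Lemma nodescent a b x y :
  nseq a false ++ nseq b true = x ++ true :: false :: y -> False.
Proof.
elim: a x => [|a IH] x /=.
  move=> H; have : false \in nseq b true by rewrite H mem_cat !inE orbT.
  by rewrite mem_nseq andbF.
case: x => [|c x] /=; first by case.
by case=> _ /IH.
Qed.

Lemma decomp (w : seq bool) :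
  (exists b, w = nseq b true) \/
  exists v0 a b, [/\ 0 < a, last true v0 = true &
                   w = v0 ++ nseq a false ++ nseq b true].
Proof.
elim/last_ind: w => [|s x IH]; first by left; exists 0.
case: x; case: IH => [[b ->]|[v0 [a [b [Ha Hl ->]]]]].
- by left; exists b.+1; rewrite -cats1 -(nseqD b 1) addn1.
- by right; exists v0, a, b.+1; rewrite -cats1 -!catA -(nseqD b 1) addn1.
- right; exists (nseq b true), 1, 0; split => //; rewrite ?cats1 //.
  by case: b => // b; rewrite last_nseqS.
- case: b => [|b].
    by right; exists v0, a.+1, 0; rewrite /= !cats0; split => //; rewrite -cats1 -catA -(nseqD a 1) addn1.
  right; exists (v0 ++ nseq a false ++ nseq b.+1 true), 1, 0; split => //.
    by rewrite !last_cat last_nseqS.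
  by rewrite -cats1.
Qed.

Lemma qdec_ones q b : qdecreasing q (nseq b true).
Proof.
move=> u t a' b' H Ha _ _ _; exfalso.
have : false \in nseq b true.
  by rewrite H mem_cat; case: (a') Ha => // a'' _; rewrite /= inE eqxx orbT.
by rewrite mem_nseq andbF.
Qed.
Lemma lastL (v0 : seq bool) q a b :
  last true v0 = true -> 0 < a ->
  qdecreasing q (v0 ++ nseq a false ++ nseq b true) <->
  qdecreasing q v0 /\ b < q * a.
Proof.
move=> Hl Ha; split.
  move=> Hq; split; last by apply: (Hq v0 [::] a b) => //; [rewrite cats0|left].
  move=> u t a' b' Hv Ha' Hu Ht Hb.
  apply: (Hq u (t ++ nseq a false ++ nseq b true) a' b') => //.
  - by rewrite Hv -!catA.
  - right; case: Ht => [->|]; first by case: (a) Ha.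
    by case: t {Hv Hb}.
  - move=> Hb0; exfalso; move: (Hb Hb0) Hv => -> ; rewrite Hb0 /= cats0 => Hv.
    by move: Hl; rewrite Hv last_cat; case: (a') Ha' => // a'' _; rewrite last_nseqS.
case=> Hq Hb u t a' b' H Ha' Hu Ht Hb'.
have [Hs|Hs] := leqP (size v0) (size u).
  have [m [Hm1 Hm2]] := cat_split H Hs.
  case/lastP: m Hm1 Hm2 => [|m c] Hm1 Hm2.
    rewrite cat0s in Hm2.
    case: Ht => Ht.
      rewrite Ht cats0 in Hm2.
      have E1 := congr1 (count negb) Hm2; have E2 := congr1 (count id) Hm2.
      rewrite !count_cat !count_nseq /= in E1 E2.
      have -> : a' = a by lia.
      have -> : b' = b by lia.
      done.
    case: t Ht Hb' H Hm2 => [|c t] //= -> Hb' H Hm2.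
    case: b' Hb' H Hm2 => [|b'] Hb' H Hm2; first by have := Hb' erefl.
    exfalso; apply: (nodescent a b (nseq a' false ++ nseq b' true) (t)).
    by rewrite Hm2 -catA nseqS_cat.
  have Hc : c = true by move: Hu; rewrite Hm1 last_cat last_rcons.
  subst c; exfalso; case: (a') Ha' Hm2 => // a'' _ Hm2.
  apply: (nodescent a b (m) (nseq a'' false ++ nseq b' true ++ t)).
  by rewrite Hm2 -cats1 -catA.
have Hs' : size u <= size v0 by apply: ltnW.
have [m [Hm1 Hm2]] := cat_split (esym H) Hs'.
have [Hs2|Hs2] := leqP (size (nseq a' false ++ nseq b' true)) (size m).
  have [m2 [Hm3 Hm4]] := cat_split (etrans (esym (catA _ _ _)) Hm2) Hs2.
  apply: (Hq u m2 a' b') => //.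
  - by rewrite Hm1 Hm3 -!catA.
  - case: m2 Hm3 Hm4 => [|c m2]; first by left.
    move=> _ Hm4; right; rewrite Hm4 in Ht; by case: Ht.
  - move=> Hb0; move: (Hb' Hb0) Hm4 => -> Hm4; exfalso.
    by move: (congr1 size Hm4); rewrite /= !size_cat !size_nseq; lia.
have Hs3 : size m <= size (nseq a' false ++ nseq b' true) by apply: ltnW.
have [m3 [Hm5 Hm6]] := cat_split (esym (etrans (esym (catA _ _ _)) Hm2)) Hs3.
case/lastP: m Hm1 Hm2 Hs Hs2 Hs3 Hm5 Hm6 => [|m c] Hm1 Hm2 Hs Hs2 Hs3 Hm5 Hm6.
  by rewrite Hm1 cats0 ltnn in Hs.
have Hc : c = true by move: Hl; rewrite Hm1 last_cat last_rcons.
subst c.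
case: m3 Hm5 Hm6 => [|c m3] Hm5 Hm6.
  by rewrite Hm5 cats0 ltnn in Hs2.
case: (a) Ha Hm6 => // a0 _ /= [Hc _]; subst c; exfalso.
apply: (nodescent a' b' (m) (m3)).
by rewrite Hm5 -cats1 -catA.
Qed.

Lemma psi_form q v0 a b :
  psi q (v0 ++ nseq a.+1 false ++ nseq b true) =
  v0 ++ nseq a.+2 false ++ nseq (b + q) true.
Proof.
rewrite nseqS_cat catA psi_last0 -catA /=.
by rewrite -!nseqS_cat.
Qed.

Theorem proposition2 (n q : nat) (hq : 1 <= q) (w' : seq bool) :
  (exists w : seq bool, binword n w /\ qdecreasing q w /\ psi q w = w') <->
  (binword (n + q + 1) w' /\ qdecreasing q w' /\
   exists u : seq bool, w' = u ++ nseq q true).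
Proof.
rewrite /binword; split.
  case=> w [Hs [Hq <-]].
  case: (decomp w) => [[b Hw]|[v0 [a [b [Ha Hl Hw]]]]]; subst w.
    rewrite psi_ones size_nseq in Hs *; subst b.
    split; first by rewrite size_nseq.
    split; first exact: qdec_ones.
    by exists (nseq (n + 1) true); rewrite -nseqD addnAC.
  case: a Ha Hq Hs => // a _ Hq Hs.
  rewrite psi_form.
  have [Hq0 Hb] := (lastL _ _ _ _ Hl (ltn0Sn a)).1 Hq.
  split; first by move: Hs; rewrite !size_cat !size_nseq => <-; lia.
  split.
    apply/(lastL _ _ _ _ Hl) => //; split => //.
    by move: Hb; rewrite !mulnS; lia.
  by exists (v0 ++ nseq a.+2 false ++ nseq b true); rewrite nseqD !catA.
case=> Hs [Hq [u Hu]].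
case: (decomp w') => [[b Hw]|[v0 [a [b [Ha Hl Hw]]]]]; rewrite {}Hw in Hs Hq Hu *.
  rewrite size_nseq in Hs; subst b.
  exists (nseq n true); split; first by rewrite size_nseq.
  by split; [exact: qdec_ones | rewrite psi_ones].
have [Hq0 Hb] := (lastL _ _ _ _ Hl Ha).1 Hq.
have Hqb : q <= b.
  rewrite leqNgt; apply/negP => Hlt.
  have Hsz : size u <= size (v0 ++ nseq a false).
    move: (congr1 size Hu); rewrite !size_cat !size_nseq; lia.
  have [m [Hm1 Hm2]] := cat_split (etrans (esym Hu) (catA _ _ _)) Hsz.
  case/lastP: m Hm1 Hm2 => [|m c] Hm1 Hm2.
    by move: (congr1 size Hm2); rewrite /= !size_nseq; lia.
  have Hc : c \in nseq q true by rewrite Hm2 mem_cat mem_rcons inE eqxx.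
  rewrite mem_nseq in Hc; case/andP: Hc => _ /eqP Hc; subst c.
  move: (congr1 (last true) Hm1); rewrite !last_cat last_rcons.
  by case: (a) Ha => // a0 _; rewrite last_nseqS.
case: a Ha Hq Hs Hb Hu => // [] [|a] _ Hq Hs Hb Hu.
  by move: Hb; rewrite muln1; lia.
exists (v0 ++ nseq a.+1 false ++ nseq (b - q) true); split.
  by move: Hs; rewrite !size_cat !size_nseq; lia.
split; last by rewrite psi_form subnK.
apply/(lastL _ _ _ _ Hl) => //; split => //.
by move: Hb; rewrite !mulnS; lia.
Qed.
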